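(* Let $(P_n(x))_{n \ge 1}$ be a splitting sequence such that $P_1(x)$ is not a monomial. Then: (1) if $P_1(x)$ is nice, then for each $n \in \mathbb{N}$ the polynomial $P_n(x)$ is nice if and only if it is irreducible in $\mathbb{Z}[x]$; (2) if the binary string of $(P_n(x))_{n \ge 1}$ contains infinitely many copies of $S$, then $P_1(x)$ is nice (and hence, for each $n$, $P_n(x)$ is nice if and only if it is irreducible).
   Context: A polynomial in $\mathbb{Z}[x]$ is nice if it is irreducible in $\mathbb{Z}[x]$ and its leading and constant coefficients both lie in $\{\pm 1\}$. Splitting sequence of an irreducible $P \in \mathbb{Z}[x]$: a sequence $(P_n)_{n \ge 1}$ in $\mathbb{Z}[x]$ with $P_1 = P$ such that for each $n$: if $P_n$ is irreducible in $\mathbb{Z}[x]$, then $P_{n+1}(x) = P_n(x^2)$; if $P_n$ is reducible, then (as $n \ge 2$, $P_{n-1}$ is irreducible and $P_n(x) = P_{n-1}(x^2)$ factors in $\mathbb{Z}[x]$ as a product of exactly two irreducibles) $P_{n+1}$ is one of these two irreducible factors. Its binary string is $s_1 s_2 \ldots$ with $s_n = L$ if $P_n$ is irreducible and $s_n = S$ otherwise. *)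

(* Defs.v *)
From HB Require Import structures.
From mathcomp Require Import all_boot all_order all_algebra.
Set Implicit Arguments. Unset Strict Implicit. Unset Printing Implicit Defensive.
Import GRing.Theory.
Local Open Scope ring_scope.

(* Irreducibility in the ring Z[x] (as a ring element: nonzero, non-unit,
   and every factorization has a unit factor). Note 2*x is NOT irreducible. *)
Definition irreducibleZx (p : {poly int}) : Prop :=
  p != 0 /\ p \isn't a GRing.unit /\
  forall q r : {poly int}, p = q * r -> q \is a GRing.unit \/ r \is a GRing.unit.

Definition nice (p : {poly int}) : Prop :=
  irreducibleZx p /\ (lead_coef p = 1 \/ lead_coef p = -1)
  /\ (p`_0 = 1 \/ p`_0 = -1).

Definition monomial (p : {poly int}) : Prop :=
  exists (c : int) (k : nat), p = c%:P * 'X^k.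

(* Splitting sequence, indexed from 1 (the value P 0 is irrelevant). *)
Definition splitting_sequence (P : nat -> {poly int}) : Prop :=
  irreducibleZx (P 1%N) /\
  forall n : nat, (1 <= n)%N ->
    (irreducibleZx (P n) -> P n.+1 = P n \Po 'X^2) /\
    (~ irreducibleZx (P n) ->
       exists Q : {poly int},
         irreducibleZx (P n.+1) /\ irreducibleZx Q /\ P n = P n.+1 * Q).

Definition infinitely_many_S (P : nat -> {poly int}) : Prop :=
  forall m : nat, exists n : nat, (m <= n)%N /\ (1 <= n)%N /\ ~ irreducibleZx (P n).

(* Main.v *)
Require Import Defs.
From mathcomp Require Import all_boot all_order all_algebra.
Import GRing.Theory Num.Theory.
Local Open Scope ring_scope.
Set Implicit Arguments. Unset Strict Implicit.

Lemma unit_int (c : int) : c \is a GRing.unit -> c = 1 \/ c = -1.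
Proof. by move=> /orP [/eqP -> | /eqP ->]; [left|right]. Qed.

Lemma unit_int_abs (c : int) : c \is a GRing.unit -> absz c = 1%N.
Proof. by case/unit_int => ->. Qed.

Lemma unit_polyP (u : {poly int}) : u \is a GRing.unit ->
  exists2 c : int, c \is a GRing.unit & u = c%:P.
Proof.
rewrite poly_unitE => /andP [/size_poly1P [c c0 ->] cu].
by exists c => //; rewrite coefC in cu.
Qed.

Lemma polyC_unitP (c : int) : c \is a GRing.unit -> c%:P \is a GRing.unit.
Proof. by move=> cu; rewrite poly_unitE coefC /= cu size_polyC; case/unit_int: cu => ->. Qed.

Definition sN (p : {poly int}) := p \Po (- 'X).

Lemma sNM p q : sN (p * q) = sN p * sN q.
Proof. exact: comp_polyM. Qed.

Lemma sNC c : sN c%:P = c%:P.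
Proof. exact: comp_polyC. Qed.

Lemma sNK p : sN (sN p) = p.
Proof.
rewrite /sN -comp_polyA.
have -> : (- 'X : {poly int}) \Po (- 'X) = 'X.
  by rewrite -scaleN1r comp_polyZ comp_polyX scalerA mulrNN mulr1 scale1r.
by rewrite comp_polyXr.
Qed.

Lemma sN_unit u : u \is a GRing.unit -> sN u \is a GRing.unit.
Proof. by move=> /unit_polyP [c cu ->]; rewrite sNC; apply: polyC_unitP. Qed.

Lemma irr_sN p : irreducibleZx p -> irreducibleZx (sN p).
Proof.
case=> p0 [pu pirr]; split; [|split].
- by apply: contra p0 => /eqP e; rewrite -(sNK p) e /sN comp_poly0.
- by apply: contra pu => /sN_unit; rewrite sNK.
- move=> q r e; have: p = sN q * sN r by rewrite -sNM -e sNK.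
  by case/pirr => /sN_unit; rewrite sNK; [left|right].
Qed.

Lemma coef0_comp (p q : {poly int}) : (p \Po q)`_0 = p.[q`_0].
Proof. by rewrite -horner_coef0 horner_comp horner_coef0. Qed.

Lemma sN_coef0 p : (sN p)`_0 = p`_0.
Proof. by rewrite /sN coef0_comp coefN coefX oppr0 horner_coef0. Qed.

Lemma X2_coef0 (p : {poly int}) : (p \Po 'X^2)`_0 = p`_0.
Proof. by rewrite coef0_comp coefXn horner_coef0. Qed.

Lemma sN_lead p : absz (lead_coef (sN p)) = absz (lead_coef p).
Proof.
rewrite /sN lead_coef_comp ?size_opp ?size_polyX //.
by rewrite lead_coefN lead_coefX abszM -signr_odd; case: odd; rewrite muln1.
Qed.

Lemma X2_lead (p : {poly int}) : lead_coef (p \Po 'X^2) = lead_coef p.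
Proof. by rewrite lead_coef_comp ?size_polyXn // lead_coefXn expr1n mulr1. Qed.

Lemma unit_sq (c : int) : c \is a GRing.unit -> c * c = 1.
Proof. by case/unit_int => ->. Qed.

Lemma irr_mc p : irreducibleZx p -> (1 < size p)%N -> irreducible_poly p.
Proof.
case=> p0 [pu pirr] sp; split => // q sq /dvdpP_int [r e].
have q0 : q != 0.
  by apply/eqP => q0; move/eqP: p0; apply; rewrite e q0 zprimitive0 mul0r.
case: (pirr _ _ e) => [/unit_polyP [c cu ec] | /unit_polyP [c cu ec]].
  by move: sq; rewrite -size_zprimitive ec size_polyC; case/unit_int: cu => ->.
rewrite /eqp; apply/andP; split.
  rewrite e; apply: dvdp_mulr; rewrite {1}[q]zpolyEprim dvdpZl //.
  by rewrite zcontents_eq0.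
have -> : q = (zcontents q * c)%:P * p.
  have cc : c%:P * c%:P = 1 :> {poly int} by rewrite -polyCM unit_sq.
  rewrite e ec polyCM mulrAC -!mulrA cc mulr1 mul_polyC -zpolyEprim //.
exact: dvdp_mull.
Qed.

Lemma notunit_size (p : {poly int}) : (1 < size p)%N -> p \isn't a GRing.unit.
Proof. by move=> sp; rewrite poly_unitE negb_and; apply/orP; left; rewrite neq_ltn sp orbT. Qed.

Lemma div_unit A X : irreducibleZx A -> irreducibleZx X -> (1 < size A)%N ->
  A %| X -> exists2 u, u \is a GRing.unit & X = A * u.
Proof.
move=> [A0 [Au Airr]] [X0 [Xu Xirr]] sA /dvdpP_int [r e].
have nzp : zprimitive A \isn't a GRing.unit by apply: notunit_size; rewrite size_zprimitive.
have ru : r \is a GRing.unit by case: (Xirr _ _ e) => // h; move: nzp; rewrite h.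
have eA : A = (zcontents A)%:P * zprimitive A by rewrite mul_polyC -zpolyEprim.
have : (zcontents A)%:P \is a GRing.unit by case: (Airr _ _ eA) => // h; move: nzp; rewrite h.
case/unit_polyP => d du /polyC_inj ed.
have cc : (zcontents A)%:P * (zcontents A)%:P = 1 :> {poly int} by rewrite -polyCM ed unit_sq.
exists ((zcontents A)%:P * r); first by rewrite unitrM ru andbT ed; apply: polyC_unitP.
move: eA cc; set z := (zcontents A)%:P; set y := zprimitive A => eA cc.
rewrite e {2}eA mulrACA cc mul1r //.
Qed.

Lemma X2_sN (q : {poly int}) : sN (q \Po 'X^2) = q \Po 'X^2.
Proof.
rewrite /sN -comp_polyA; congr (q \Po _).
by rewrite expr2 comp_polyM comp_polyX mulrNN.
Qed.

Lemma polyNeq (w : {poly int}) : w = - w -> w = 0.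
Proof.
move=> h; apply/polyP => i; rewrite coef0; apply/eqP.
by rewrite -eqNr -coefN -h.
Qed.

Lemma even_sN (p : {poly int}) : sN p = p -> p = even_poly p \Po 'X^2.
Proof.
move=> h.
have e := poly_even_odd p.
set E := even_poly p \Po 'X^2 in e *; set O := odd_poly p \Po 'X^2 in e.
have : sN p = E - O * 'X.
  rewrite -{1}e /sN comp_polyD comp_polyM comp_polyX -!/(sN _) !X2_sN.
  by rewrite mulrN.
rewrite h -{1}e => /addrI h2.
by move/polyNeq: h2 => h3; rewrite -{1}e h3 addr0.
Qed.

Lemma X2_inj (p q : {poly int}) : p \Po 'X^2 = q \Po 'X^2 -> p = q.
Proof.
move=> h; apply/polyP => i.
have := congr1 (fun r : {poly int} => r`_(i * 2)) h.
by rewrite /= !coef_comp_poly_Xn // dvdn_mull // mulnK.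
Qed.

Lemma X2_unit (q : {poly int}) : q \Po 'X^2 \is a GRing.unit -> q \is a GRing.unit.
Proof.
move=> /[dup] /unit_polyP [c cu e] _.
have : q \Po 'X^2 = c%:P \Po 'X^2 by rewrite e comp_polyC.
by move/X2_inj => ->; apply: polyC_unitP.
Qed.

Lemma X2_unit' (q : {poly int}) : q \is a GRing.unit -> q \Po 'X^2 \is a GRing.unit.
Proof. by move=> /unit_polyP [c cu ->]; rewrite comp_polyC; apply: polyC_unitP. Qed.

Lemma size_gt1 G A B : irreducibleZx G -> irreducibleZx A -> irreducibleZx B ->
  G \Po 'X^2 = A * B -> (1 < size A)%N.
Proof.
move=> [G0 [Gu Girr]] [A0 [Au Airr]] [B0 [Bu Birr]] e.
rewrite ltnNge; apply/negP => /size1_polyC eA.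
set c := A`_0 in eA.
have eG : G = c%:P * even_poly B.
  apply/polyP => i; have := congr1 (fun r : {poly int} => r`_(i * 2)) e.
  by rewrite /= coef_comp_poly_Xn // dvdn_mull // mulnK // eA !coefCM coef_even_poly -mul2n mulnC.
case: (Girr _ _ eG) => [cu | /unit_polyP [d du ed]].
  by move: Au; rewrite eA cu.
have : G \Po 'X^2 = G by rewrite eG ed -polyCM comp_polyC.
rewrite e => eG2; case: (Girr A B (esym eG2)) => h.
  by move: Au; rewrite h.
by move: Bu; rewrite h.
Qed.

Definition mm (p : {poly int}) : nat := muln (absz (lead_coef p)) (absz (p`_0)).

Lemma mmM p q : mm (p * q) = (mm p * mm q)%N.
Proof. by rewrite /mm lead_coefM coef0M !abszM mulnACA. Qed.

Lemma mm_unit p u : u \is a GRing.unit -> mm (p * u) = mm p.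
Proof.
move=> /unit_polyP [c cu ->]; rewrite mmM; suff -> : mm c%:P = 1%N by rewrite muln1.
by rewrite /mm lead_coefC coefC /= (@unit_int_abs c cu).
Qed.

Lemma mm_sN p : mm (sN p) = mm p.
Proof. by rewrite /mm sN_lead sN_coef0. Qed.

Lemma mm_X2 p : mm (p \Po 'X^2) = mm p.
Proof. by rewrite /mm X2_lead X2_coef0. Qed.

Lemma key G A B : irreducibleZx G -> G`_0 != 0 -> irreducibleZx A ->
  irreducibleZx B -> G \Po 'X^2 = A * B -> mm G = (mm A * mm A)%N.
Proof.
move=> iG G00 iA iB e.
have sA := size_gt1 iG iA iB e.
have e' : G \Po 'X^2 = B * A by rewrite e mulrC.
have sB := size_gt1 iG iB iA e'.
have A00 : A`_0 != 0.
  by apply: contra G00 => /eqP h; rewrite -X2_coef0 e coef0M h mul0r.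
have es : sN A * sN B = A * B by rewrite -sNM -e X2_sN.
have irA := irr_mc iA sA.
case hd: (A %| sN A).
  have [u uu eu] := div_unit iA (irr_sN iA) sA hd.
  case/unit_polyP: uu => c /unit_int cu ec; case: cu => ?; subst c.
    move: eu; rewrite ec mulr1 => eu.
    have eB : sN B = B.
      by apply: (mulfI (irredp_neq0 irA)); rewrite -es eu.
    have eA' := even_sN eu; have eB' := even_sN eB.
    have : G \Po 'X^2 = (even_poly A * even_poly B) \Po 'X^2.
      by rewrite comp_polyM -eA' -eB'.
    move/X2_inj => eG; case: iG => _ [_ Girr].
    case: (Girr _ _ eG) => /X2_unit'; rewrite -?eA' -?eB' => h.
      by case: iA => _ [/negP]. 
    by case: iB => _ [/negP].
  have := congr1 (fun r : {poly int} => r`_0) eu.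
  rewrite /= ec sN_coef0 coefMC => /eqP; rewrite -subr_eq0 mulrN1 opprK.
  by rewrite -mulr2n mulrn_eq0 /= (negPf A00).
have cop : coprimep A (sN A) by rewrite irreducible_poly_coprime // hd.
have hd2 : A %| sN B.
  by rewrite -(Gauss_dvdpl _ cop) mulrC es dvdp_mulIl.
have [u uu eu] := div_unit iA (irr_sN iB) sA hd2.
by rewrite -mm_X2 e mmM -(mm_sN B) eu mm_unit.
Qed.

From Stdlib Require Classical_Prop.
From mathcomp Require Import zify.

Lemma abs1 (x : int) : absz x = 1%N -> x = 1 \/ x = -1.
Proof. by case: x => [[|[|]]|[|]] //= _; [left|right]. Qed.

Lemma red_pred P : splitting_sequence P -> forall n, (1 <= n)%N ->
  ~ irreducibleZx (P n) ->
  [/\ (2 <= n)%N, irreducibleZx (P n.-1) & P n = P n.-1 \Po 'X^2].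
Proof.
move=> [H1 HS] [|[|k]] //= _ hn.
have [h|h] := Classical_Prop.classic (irreducibleZx (P k.+1)).
  by split; [done | exact: h | case: (HS k.+1 isT) => ->].
by case: (HS k.+1 isT) => _ /(_ h) [Q [/hn]].
Qed.

Lemma const0 P : splitting_sequence P -> ~ monomial (P 1%N) ->
  forall n, (1 <= n)%N -> (P n)`_0 != 0.
Proof.
move=> HS HM; elim => [|n IH] // _.
case: n IH => [|n] IH.
  apply/negP => /eqP h0; apply: HM.
  have : root (P 1%N) 0 by rewrite /root horner_coef0 h0.
  move/factor_theorem => [q eq].
  case: HS => [[_ [_ Hirr]] _].
  case: (Hirr _ _ eq) => [/unit_polyP [c _ ec] | hu].
    by exists c, 1%N; rewrite eq ec subr0 expr1.
  by move: hu; rewrite poly_unitE size_XsubC.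
have IH' := IH isT.
case: HS => _ HS.
have [h|h] := Classical_Prop.classic (irreducibleZx (P n.+1)).
  by case: (HS n.+1 isT) => /(_ h) -> _; rewrite X2_coef0.
case: (HS n.+1 isT) => _ /(_ h) [Q [_ [_ e]]].
by apply: contra IH' => /eqP h0; rewrite e coef0M h0 mul0r.
Qed.

Lemma nice_inv P : splitting_sequence P -> nice (P 1%N) ->
  forall n, (1 <= n)%N -> absz (lead_coef (P n)) = 1%N /\ absz ((P n)`_0) = 1%N.
Proof.
move=> HS [_ [hl hc]]; elim => [|n IH] // _.
case: n IH => [|n] IH.
  by split; [case: hl => -> | case: hc => ->].
have [IHl IHc] := IH isT.
case: HS => _ HS.
have [h|h] := Classical_Prop.classic (irreducibleZx (P n.+1)).
  by case: (HS n.+1 isT) => /(_ h) -> _; rewrite X2_coef0 X2_lead.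
case: (HS n.+1 isT) => _ /(_ h) [Q [_ [_ e]]].
move: IHl IHc; rewrite e lead_coefM coef0M !abszM.
by move=> /eqP; rewrite muln_eq1 => /andP [/eqP -> _] /eqP; rewrite muln_eq1 => /andP [/eqP -> _].
Qed.

Lemma mm_step P : splitting_sequence P -> ~ monomial (P 1%N) ->
  forall n, (1 <= n)%N -> ~ irreducibleZx (P n) ->
  mm (P n) = (mm (P n.+1) * mm (P n.+1))%N.
Proof.
move=> HS HM n n1 hn.
have [n2 irrp ep] := red_pred HS n1 hn.
have n3 : (1 <= n.-1)%N by case: n n2 {n1 hn irrp ep} => [|[|]].
have c0 := const0 HS HM n3.
case: (HS) => _ HS'; case: (HS' n n1) => _ /(_ hn) [Q [iA [iQ e]]].
rewrite ep mm_X2; apply: (key irrp c0 iA iQ); by rewrite -ep.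
Qed.

Lemma mm_prop P : splitting_sequence P -> ~ monomial (P 1%N) ->
  forall k n e, (1 <= n)%N -> mm (P 1%N) = (mm (P n) ^ e)%N ->
  exists e', (e <= e')%N /\ mm (P 1%N) = (mm (P (n + k)%N) ^ e')%N.
Proof.
move=> HS HM; elim => [|k IH] n e n1 he.
  by exists e; rewrite addn0.
have [e' [ee' he']] := IH n e n1 he.
have nk1 : (1 <= n + k)%N by rewrite (leq_trans n1) // leq_addr.
rewrite addnS.
have [h|h] := Classical_Prop.classic (irreducibleZx (P (n + k)%N)).
  exists e'; split => //; case: (HS) => _ HS'.
  by case: (HS' _ nk1) => /(_ h) -> _; rewrite mm_X2.
exists (e' * 2)%N; split; first by rewrite (leq_trans ee') // leq_pmulr.
by rewrite he' (mm_step HS HM nk1 h) expnMn expnM -mulnn.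
Qed.

Lemma mm_grow P : splitting_sequence P -> ~ monomial (P 1%N) -> infinitely_many_S P ->
  forall j, exists n e, [/\ (1 <= n)%N, (j < e)%N & mm (P 1%N) = (mm (P n) ^ e)%N].
Proof.
move=> HS HM HI; elim => [|j [n [e [n1 je he]]]].
  by exists 1%N, 1%N; rewrite expn1.
have [n' [nn' [n'1 hn']]] := HI n.
have [e' [ee' he']] := mm_prop HS HM (n' - n) n1 he.
rewrite subnKC // in he'.
exists n'.+1, (e' * 2)%N; split => //.
  by move: je ee'; clear; lia.
by rewrite he' (mm_step HS HM n'1 hn') expnMn expnM -mulnn.
Qed.

Unset Implicit Arguments.

Theorem lemma3p13 (P : nat -> {poly int}) :
  splitting_sequence P -> ~ monomial (P 1%N) ->
  (nice (P 1%N) ->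
     forall n : nat, (1 <= n)%N -> (nice (P n) <-> irreducibleZx (P n))) /\
  (infinitely_many_S P ->
     nice (P 1%N) /\
     forall n : nat, (1 <= n)%N -> (nice (P n) <-> irreducibleZx (P n))).
Proof.
move=> HS HM.
have part1 : nice (P 1%N) ->
     forall n : nat, (1 <= n)%N -> (nice (P n) <-> irreducibleZx (P n)).
  move=> hn n n1; split; first by case.
  have [hl hc] := nice_inv HS hn n1.
  by move=> hi; split => //; split; apply: abs1.
split => // HI.
suff hn : nice (P 1%N) by split => //; apply: part1.
have [n [e [n1 je he]]] := mm_grow HS HM HI (mm (P 1%N)).
have mpos : (0 < mm (P n))%N.
  have c0 := const0 HS HM n1.
  have p0 : P n != 0 by apply: contra c0 => /eqP ->; rewrite coef0.
  by rewrite /mm muln_gt0 !absz_gt0 lead_coef_eq0 p0.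
have m1 : mm (P n) = 1%N.
  apply/eqP; rewrite eqn_leq mpos andbT leqNgt; apply/negP => m2.
  have := ltn_expl e m2; rewrite -he => h.
  by move: (ltn_trans je h); rewrite ltnn.
move: he; rewrite m1 exp1n /mm => /eqP; rewrite muln_eq1 => /andP [/eqP hl /eqP hc].
by split; [case: HS | split; apply: abs1].
Qed.
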